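(* Let $a,w$ satisfy Assumption (A), $n\ge1$, $k>0$, $q\in[0,1)$, $l\ge0$, $S_H>0$, $\beta_{H\leftarrow M},\beta_{M\leftarrow H},\rho,\gamma,\mu>0$, and assume $\hat R_e\,h(p(0),q)>1$. Let $$\eta:=\frac{\hat R_e-(1+l)}{\hat R_e-1}\cdot\frac{1}{1-q},\qquad r(x):=a(x)-\eta\big(a(x)+w(x)\big).$$ Then system (O) has an equilibrium with $I_H^*>0$ if and only if there exists $x\in(0,+\infty)$ with $r(x)=0$ and $$1+l<\hat R_e<1+\frac{l}{q}$$ (the upper bound being void when $q=0$). If such an equilibrium exists, it is unique and given by $$I_H^*=p^{-1}(\eta),\qquad I_M^*=\frac{\beta_{M\leftarrow H}}{\mu}h(p(I_H^* ),q)I_H^*,\qquad Z_i^*=J^*=I_H^*\ (i=1,\dots,n).$$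
   Context: Assumption (A): $a,w:[0,\infty)\to(0,\infty)$ are continuously differentiable with $a'(x)>0$ and $w'(x)\le0$ for all $x\ge0$. Let $c(p,q):=1-p(1-q)$, $p(x):=a(x)/(a(x)+w(x))$ (strictly increasing, so $p^{-1}$ exists on its range), $h(p,q):=c(p,q)/(c(p,q)+l)$, and $\hat R_e:=\sqrt{\frac{\beta_{H\leftarrow M}\beta_{M\leftarrow H}}{\gamma\mu}\rho S_H}$. System (O) is the ODE system, with $S_H>0$ a fixed parameter, $$\dot I_H=\beta_{H\leftarrow M}\rho I_M h(p(J),q)S_H-\gamma I_H,\qquad \dot I_M=\beta_{M\leftarrow H}h(p(J),q)I_H-\mu I_M,$$ $$\dot Z_1=kI_H-kZ_1,\qquad \dot Z_i=kZ_{i-1}-kZ_i\ (i=2,\dots,n),\qquad J:=Z_n$$ (for $n=1$: $\dot J=kI_H-kJ$), on the nonnegative orthant. *)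

(* Defs.v *)
From Stdlib Require Import Reals Lra.
From Coquelicot Require Import Coquelicot.
Open Scope R_scope.

Definition C1_on_nonneg (f f' : R -> R) : Prop :=
  (forall x, 0 < x -> is_derive f x (f' x)) /\
  filterlim (fun t => (f t - f 0) / t) (at_right 0) (locally (f' 0)) /\
  (forall x, 0 <= x ->
     filterlim f' (within (fun y => 0 <= y) (locally x)) (locally (f' x))).

Definition assumptionA (a w : R -> R) : Prop :=
  (forall x, 0 <= x -> 0 < a x) /\ (forall x, 0 <= x -> 0 < w x) /\
  exists a' w' : R -> R,
    C1_on_nonneg a a' /\ C1_on_nonneg w w' /\
    (forall x, 0 <= x -> 0 < a' x) /\ (forall x, 0 <= x -> w' x <= 0).

Definition cfun (p q : R) : R := 1 - p * (1 - q).
Definition pfun (a w : R -> R) (x : R) : R := a x / (a x + w x).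
Definition hfun (l p q : R) : R := cfun p q / (cfun p q + l).
Definition Rhat (bHM bMH rho gamma mu SH : R) : R :=
  sqrt (bHM * bMH / (gamma * mu) * rho * SH).

(* Equilibrium of system (O) in the nonnegative orthant.
   State: (IH, IM, Z_1, ..., Z_n), with Z : nat -> R (only indices 1..n matter),
   J := Z n. *)
Definition equilibriumO (a w : R -> R) (n : nat) (k q l SH bHM bMH rho gamma mu : R)
    (IH IM : R) (Z : nat -> R) : Prop :=
  0 <= IH /\ 0 <= IM /\ (forall i, (1 <= i <= n)%nat -> 0 <= Z i) /\
  bHM * rho * IM * hfun l (pfun a w (Z n)) q * SH - gamma * IH = 0 /\
  bMH * hfun l (pfun a w (Z n)) q * IH - mu * IM = 0 /\
  k * IH - k * Z 1%nat = 0 /\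
  (forall i, (2 <= i <= n)%nat -> k * Z (i - 1)%nat - k * Z i = 0).

(* Main.v *)
Require Import Defs.
From Stdlib Require Import Reals Lra Lia.
From Coquelicot Require Import Coquelicot.
Open Scope R_scope.

Lemma Zeq (n : nat) (k IH : R) (Z : nat -> R) : 0 < k ->
  k * IH - k * Z 1%nat = 0 ->
  (forall i, (2 <= i <= n)%nat -> k * Z (i - 1)%nat - k * Z i = 0) ->
  forall i, (1 <= i <= n)%nat -> Z i = IH.
Proof.
  intros Hk H1 H2 i. induction i as [|i IHi]; intros Hi; [lia|].
  destruct i as [|j].
  - assert (k * (IH - Z 1%nat) = 0) by lra.
    apply Rmult_integral in H. destruct H; lra.
  - assert (Hj := H2 (S (S j)) ltac:(lia)).
    replace (S (S j) - 1)%nat with (S j) in Hj by lia.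
    rewrite IHi in Hj by lia.
    assert (k * (IH - Z (S (S j))) = 0) by lra.
    apply Rmult_integral in H. destruct H; lra.
Qed.

Lemma incr_of (f f' : R -> R) : (forall x, 0 < x -> is_derive f x (f' x)) ->
  (forall x, 0 <= x -> 0 < f' x) -> forall x y, 0 < x < y -> f x < f y.
Proof.
  intros Hd Hp x y Hxy.
  destruct (MVT_cor2 f f' x y ltac:(lra)) as [c [Hc Hc2]].
  { intros c Hc. apply is_derive_Reals. apply Hd. lra. }
  assert (0 < f' c) by (apply Hp; lra).
  assert (0 < f' c * (y - x)) by (apply Rmult_lt_0_compat; lra). lra.
Qed.

Lemma nonincr_of (f f' : R -> R) : (forall x, 0 < x -> is_derive f x (f' x)) ->
  (forall x, 0 <= x -> f' x <= 0) -> forall x y, 0 < x < y -> f y <= f x.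
Proof.
  intros Hd Hp x y Hxy.
  destruct (MVT_cor2 f f' x y ltac:(lra)) as [c [Hc Hc2]].
  { intros c Hc. apply is_derive_Reals. apply Hd. lra. }
  assert (f' c <= 0) by (apply Hp; lra).
  assert (f' c * (y - x) <= 0).
  { apply Rmult_le_0_r; lra. } lra.
Qed.

Lemma p_bounds a w x : assumptionA a w -> 0 <= x -> 0 < pfun a w x < 1.
Proof.
  intros [Ha [Hw _]] Hx. specialize (Ha x Hx). specialize (Hw x Hx).
  unfold pfun. split.
  - apply Rdiv_lt_0_compat; lra.
  - apply Rmult_lt_reg_r with (a x + w x); [lra|].
    unfold Rdiv. rewrite Rmult_assoc, Rinv_l by lra. lra.
Qed.

Lemma p_incr a w : assumptionA a w -> forall x y, 0 < x < y -> pfun a w x < pfun a w y.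
Proof.
  intros HA x y Hxy. pose proof HA as [Ha [Hw [a' [w' [[Hda _] [[Hdw _] [Ha' Hw']]]]]]].
  assert (E1 := incr_of a a' Hda Ha' x y Hxy).
  assert (E2 := nonincr_of w w' Hdw Hw' x y Hxy).
  assert (ax := Ha x ltac:(lra)). assert (ay := Ha y ltac:(lra)).
  assert (wx := Hw x ltac:(lra)). assert (wy := Hw y ltac:(lra)).
  unfold pfun. apply (Rmult_lt_reg_r ((a x + w x) * (a y + w y))).
  { apply Rmult_lt_0_compat; lra. }
  replace (a x / (a x + w x) * ((a x + w x) * (a y + w y))) with (a x * (a y + w y)) by (field; lra).
  replace (a y / (a y + w y) * ((a x + w x) * (a y + w y))) with (a y * (a x + w x)) by (field; lra).
  nra.
Qed.

Lemma c_pos P q : 0 < P < 1 -> 0 <= q < 1 -> 0 < cfun P q.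
Proof. intros. unfold cfun. nra. Qed.

Lemma core (P q l Re bHM bMH rho gamma mu SH IH IM : R) :
  0 < P < 1 -> 0 <= q < 1 -> 0 <= l -> 0 < SH ->
  0 < bHM -> 0 < bMH -> 0 < rho -> 0 < gamma -> 0 < mu ->
  Re = Rhat bHM bMH rho gamma mu SH -> 1 < Re -> 0 < IH ->
  bHM * rho * IM * hfun l P q * SH - gamma * IH = 0 ->
  bMH * hfun l P q * IH - mu * IM = 0 ->
  P = (Re - (1 + l)) / (Re - 1) * (1 / (1 - q)) /\
  IM = bMH / mu * hfun l P q * IH.
Proof.
  intros HP Hq Hl HS H1 H2 H3 H4 H5 HRe HRe1 HIH E1 E2.
  assert (Hc := c_pos P q HP Hq).
  set (c := cfun P q) in *. set (H := hfun l P q) in *.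
  assert (HIM : IM = bMH / mu * H * IH).
  { apply (Rmult_eq_reg_r mu); [|lra]. field_simplify; lra. }
  split; [|exact HIM].
  assert (HH : H = c / (c + l)) by reflexivity.
  assert (Hpos : 0 < H) by (rewrite HH; apply Rdiv_lt_0_compat; lra).
  assert (Re2 : Re * Re = bHM * bMH / (gamma * mu) * rho * SH).
  { rewrite HRe. unfold Rhat. apply sqrt_sqrt.
    apply Rmult_le_pos; [apply Rmult_le_pos|]; try lra.
    apply Rlt_le, Rdiv_lt_0_compat; nra. }
  rewrite HIM in E1.
  assert (E3 : IH * (bHM * rho * bMH * SH * H * H - gamma * mu) = 0).
  { apply (Rmult_eq_reg_r (/ mu)); [|apply Rinv_neq_0_compat; lra].
    rewrite Rmult_0_l. rewrite <- E1. field. lra. }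
  apply Rmult_integral in E3. destruct E3 as [E3|E3]; [lra|].
  assert (E4 : (H * Re) * (H * Re) = 1).
  { replace ((H * Re) * (H * Re)) with (H * H * (Re * Re)) by ring.
    rewrite Re2. apply (Rmult_eq_reg_r (gamma * mu)); [|nra].
    field_simplify; [nra|lra]. }
  assert (E5 : H * Re = 1).
  { assert (0 < H * Re) by (apply Rmult_lt_0_compat; lra).
    assert (HZ : (H * Re - 1) * (H * Re + 1) = 0) by nra.
    apply Rmult_integral in HZ; destruct HZ; lra. }
  assert (E6 : c * Re = c + l).
  { rewrite HH in E5. apply (Rmult_eq_reg_r (/ (c + l))); [|apply Rinv_neq_0_compat; lra].
    rewrite Rinv_r by lra. rewrite <- E5. field. lra. }
  unfold c, cfun in E6.
  assert (Hx : P * ((Re - 1) * (1 - q)) = Re - (1 + l)) by lra.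
  replace ((Re - (1 + l)) / (Re - 1) * (1 / (1 - q))) with ((Re - (1 + l)) / ((Re - 1) * (1 - q))) by (field; lra).
  rewrite <- Hx. field. split; lra.
Qed.

Theorem mainTheorem11 (a w : R -> R) (n : nat) (k q l SH bHM bMH rho gamma mu : R) :
  assumptionA a w ->
  (1 <= n)%nat -> 0 < k -> 0 <= q < 1 -> 0 <= l -> 0 < SH ->
  0 < bHM -> 0 < bMH -> 0 < rho -> 0 < gamma -> 0 < mu ->
  Rhat bHM bMH rho gamma mu SH * hfun l (pfun a w 0) q > 1 ->
  let Re := Rhat bHM bMH rho gamma mu SH in
  let eta := (Re - (1 + l)) / (Re - 1) * (1 / (1 - q)) in
  let r := fun x => a x - eta * (a x + w x) in
  ((exists IH IM Z, equilibriumO a w n k q l SH bHM bMH rho gamma mu IH IM Z /\ 0 < IH)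
   <->
   ((exists x, 0 < x /\ r x = 0) /\ 1 + l < Re /\ (q = 0 \/ Re < 1 + l / q)))
  /\
  (forall IH IM Z, equilibriumO a w n k q l SH bHM bMH rho gamma mu IH IM Z -> 0 < IH ->
     pfun a w IH = eta /\
     IM = bMH / mu * hfun l (pfun a w IH) q * IH /\
     (forall i, (1 <= i <= n)%nat -> Z i = IH))
  /\
  (forall IH IM Z IH' IM' Z',
     equilibriumO a w n k q l SH bHM bMH rho gamma mu IH IM Z -> 0 < IH ->
     equilibriumO a w n k q l SH bHM bMH rho gamma mu IH' IM' Z' -> 0 < IH' ->
     IH = IH' /\ IM = IM' /\ (forall i, (1 <= i <= n)%nat -> Z i = Z' i)).
Proof.
  intros HA Hn Hk Hq Hl HS H1 H2 H3 H4 H5 HR0 Re eta r.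
  assert (HRe0 : 0 <= Re) by apply sqrt_pos.
  assert (HRe1 : 1 < Re).
  { assert (Hp0 := p_bounds a w 0 HA (Rle_refl 0)).
    assert (Hc0 := c_pos _ q Hp0 Hq).
    set (c0 := cfun (pfun a w 0) q) in *.
    assert (hle : hfun l (pfun a w 0) q <= 1).
    { unfold hfun. fold c0. apply (Rmult_le_reg_r (c0 + l)); [lra|].
      field_simplify; lra. }
    assert (hge : 0 < hfun l (pfun a w 0) q).
    { unfold hfun. fold c0. apply Rdiv_lt_0_compat; lra. }
    fold Re in HR0. destruct (Rle_or_lt Re 1); [|lra]. nra. }
  assert (Hsol : forall IH IM Z, equilibriumO a w n k q l SH bHM bMH rho gamma mu IH IM Z -> 0 < IH ->
     pfun a w IH = eta /\
     IM = bMH / mu * hfun l (pfun a w IH) q * IH /\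
     (forall i, (1 <= i <= n)%nat -> Z i = IH)).
  { intros IH IM Z [_ [_ [_ [E1 [E2 [E3 E4]]]]]] HIH.
    assert (HZ := Zeq n k IH Z Hk E3 E4).
    rewrite (HZ n ltac:(lia)) in E1, E2.
    destruct (core (pfun a w IH) q l Re bHM bMH rho gamma mu SH IH IM
      (p_bounds a w IH HA ltac:(lra)) Hq Hl HS H1 H2 H3 H4 H5 eq_refl HRe1 HIH E1 E2)
      as [P1 P2].
    split; [exact P1|split; [exact P2|exact HZ]]. }
  split; [|split; [exact Hsol|]].
  - split.
    + intros [IH [IM [Z [Heq HIH]]]].
      destruct (Hsol IH IM Z Heq HIH) as [Pe _].
      assert (Hp := p_bounds a w IH HA ltac:(lra)).
      assert (aI : 0 < a IH) by (destruct HA as [Ha _]; apply Ha; lra).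
      assert (wI : 0 < w IH) by (destruct HA as [_ [Hw _]]; apply Hw; lra).
      split; [|split].
      * exists IH. split; [lra|]. unfold r. rewrite <- Pe. unfold pfun. field. lra.
      * rewrite Pe in Hp. unfold eta in Hp.
        destruct Hp as [Hp _].
        assert (0 < (Re - (1 + l)) / (Re - 1)).
        { apply (Rmult_lt_reg_r (1 / (1 - q))). apply Rdiv_lt_0_compat; lra. lra. }
        assert (0 < Re - (1 + l)).
        { apply (Rmult_lt_reg_r (/ (Re - 1))). apply Rinv_0_lt_compat; lra.
          rewrite Rmult_0_l. exact H. }
        lra.
      * rewrite Pe in Hp. unfold eta in Hp. destruct Hp as [_ Hp].
        assert (Hx : Re - (1 + l) < (Re - 1) * (1 - q)).
        { replace (Re - (1 + l)) with ((Re - (1 + l)) / (Re - 1) * (1 / (1 - q)) * ((Re - 1) * (1 - q))) by (field; lra).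
          rewrite <- (Rmult_1_l ((Re - 1) * (1 - q))) at 2.
          apply Rmult_lt_compat_r; [nra|exact Hp]. }
        destruct (Req_dec q 0) as [Hq0|Hq0]; [left; exact Hq0|right].
        assert (q * (Re - 1) < l) by nra.
        assert (Re - 1 < l / q).
        { apply (Rmult_lt_reg_r q); [lra|]. field_simplify; lra. }
        lra.
    + intros [[x [Hx Hr]] _].
      assert (Hp := p_bounds a w x HA ltac:(lra)).
      assert (aI : 0 < a x) by (destruct HA as [Ha _]; apply Ha; lra).
      assert (wI : 0 < w x) by (destruct HA as [_ [Hw _]]; apply Hw; lra).
      assert (Pe : pfun a w x = eta).
      { unfold r in Hr. unfold pfun. apply (Rmult_eq_reg_r (a x + w x)); [|lra].
        field_simplify; lra. }
      assert (Hc := c_pos _ q Hp Hq).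
      set (H := hfun l (pfun a w x) q).
      assert (HH : H * Re = 1).
      { unfold H, hfun. set (c := cfun (pfun a w x) q) in *.
        assert (E6 : c * (Re - 1) = l).
        { unfold c, cfun. rewrite Pe. unfold eta. field. lra. }
        apply (Rmult_eq_reg_r (c + l)); [|lra]. field_simplify; lra. }
      assert (Re2 : Re * Re = bHM * bMH / (gamma * mu) * rho * SH).
      { unfold Re, Rhat. apply sqrt_sqrt.
        apply Rmult_le_pos; [apply Rmult_le_pos|]; try lra.
        apply Rlt_le, Rdiv_lt_0_compat; nra. }
      assert (Hpos : 0 < H) by nra.
      exists x, (bMH / mu * H * x), (fun _ => x).
      split; [|exact Hx].
      unfold equilibriumO. fold H.
      split; [lra|]. split.
      { apply Rmult_le_pos; [|lra]. apply Rmult_le_pos; [|lra].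
        apply Rlt_le, Rdiv_lt_0_compat; lra. }
      split; [intros; lra|]. split.
      { assert (E : H * H * (bHM * bMH * rho * SH) = gamma * mu).
        { assert (E' : (H * Re) * (H * Re) = 1) by (rewrite HH; ring).
          replace ((H * Re) * (H * Re)) with (H * H * (Re * Re)) in E' by ring.
          rewrite Re2 in E'. apply (Rmult_eq_reg_r (/ (gamma * mu))).
          - rewrite Rinv_r by nra. rewrite <- E'. field. lra.
          - apply Rinv_neq_0_compat; nra. }
        apply (Rmult_eq_reg_r mu); [|lra]. field_simplify; [|lra]. nra. }
      split; [field; lra|]. split; [ring|]. intros; ring.
  - intros IH IM Z IH' IM' Z' E HI E' HI'.
    destruct (Hsol IH IM Z E HI) as [Pa [Ia Za]].
    destruct (Hsol IH' IM' Z' E' HI') as [Pb [Ib Zb]].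
    assert (HIe : IH = IH').
    { destruct (Rtotal_order IH IH') as [Hlt|[Heq|Hgt]]; [|exact Heq|].
      - assert (T := p_incr a w HA IH IH' ltac:(lra)). lra.
      - assert (T := p_incr a w HA IH' IH ltac:(lra)). lra. }
    subst IH'. split; [reflexivity|]. split; [congruence|].
    intros i Hi. rewrite Za, Zb by exact Hi. reflexivity.
Qed.
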